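(* Fix a positive integer $n$, a nonzero $n$-partition $\lambda$ with $\lambda_n=0$, and an $n$-semistandard tableau $T$ of shape $\lambda$. Let $w^1\le\dots\le w^{\lambda_1}$ be the minimal defining chain for $T$, and let $\pi^{(j,1)}$, $1\le j\le\lambda_1$, be the permutations produced by the greedy procedure. Then $w^j=\pi^{(j,1)}$ for $1\le j\le\lambda_1$.
   Context: Let $\lambda=(\lambda_1,\dots,\lambda_n)$ be weakly decreasing nonnegative integers with $\lambda_n=0$, $\lambda\ne0$, identified with its Young diagram; $c_j$ is the length of column $j$. Write $(j,i)$ for the box in column $j$, row $i$. Reading order: $(l,k)\le(j,i)$ iff $l<j$, or $l=j$ and $k\ge i$; convention $(j,c_j+1)$ means $(j-1,1)$. An $n$-semistandard tableau $T$ of shape $\lambda$ has entries in $[n]$, weakly increasing along rows, strictly increasing down columns; $T(j,i)$ is its entry and $C_j$ its $j$-th column. Permutations are in one-line form, compared in the Bruhat order. A defining chain for $T$ is a sequence $w^1\le\dots\le w^{\lambda_1}$ in Bruhat order of permutations such that for each $j$, $\{w^j_1,\dots,w^j_{c_j}\}$ is the set of entries of $C_j$. The minimal defining chain is the (existing, by a result of Deodhar) defining chain $w^1\le\dots\le w^{\lambda_1}$ such that for every defining chain $v^1\le\dots\le v^{\lambda_1}$ one has $w^j\le v^j$ for all $j$. Greedy procedure: $\pi^{(1,1)}$ has first $c_1$ entries those of $C_1$ increasing, followed by the rest of $[n]$ increasing. For $(j,i)$ with $j\ge2$ in reading order from $(2,c_2)$ to $(\lambda_1,1)$, define $\pi^{(j,i)}$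 from $\pi:=\pi^{(j,i+1)}$: if $T(j-1,i)=T(j,i)$ set $\pi^{(j,i)}=\pi$; otherwise let $i_0=i$, and given $i_{x-1}$ with $\pi_{i_{x-1}}<T(j,i)$ let $i_x$ be the smallest index $>c_j$ with $\pi_{i_{x-1}}<\pi_{i_x}\le T(j,i)$, stopping at $i_m$ with $\pi_{i_m}=T(j,i)$; set $\pi^{(j,i)}_{i_x}=\pi_{i_{x-1}}$ ($1\le x\le m$), $\pi^{(j,i)}_{i_0}=\pi_{i_m}$, others unchanged. *)

(* Defs.v *)
From mathcomp Require Import all_boot all_fingroup.
Set Implicit Arguments. Unset Strict Implicit. Unset Printing Implicit Defensive.

(* Conventions: rows i and columns j are 1-indexed naturals.
   A shape lambda is a seq nat of size n, lambda_i = nth 0 lambda i.-1.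
   A tableau is T : nat -> nat -> nat, T j i = entry in column j, row i
   (values outside the diagram are irrelevant).
   A permutation w : 'S_n has one-line form w_1..w_n with w_k = (w (k-1)).+1
   (positions and values of 'I_n are shifted by one). *)

Definition lam (la : seq nat) (i : nat) : nat := nth 0 la i.-1.

Definition collen (la : seq nat) (j : nat) : nat := count (fun x => j <= x) la.

Definition lam1 (la : seq nat) : nat := head 0 la.

Definition good_shape (n : nat) (la : seq nat) : Prop :=
  [/\ size la = n, sorted geq la, lam la n = 0 & lam1 la != 0].

Definition in_shape (la : seq nat) (j i : nat) : bool :=
  (1 <= i) && (1 <= j) && (j <= lam la i).

Definition semistandard (n : nat) (la : seq nat) (T : nat -> nat -> nat) : Prop :=
  [/\ forall j i, in_shape la j i -> 1 <= T j i <= n,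
      forall j i, in_shape la j.+1 i -> T j i <= T j.+1 i
    & forall j i, in_shape la j i.+1 -> T j i < T j i.+1].

Definition column (la : seq nat) (T : nat -> nat -> nat) (j : nat) : seq nat :=
  [seq T j i | i <- iota 1 (collen la j)].

Definition inv_len n (s : 'S_n) : nat :=
  #|[set ij : 'I_n * 'I_n | (ij.1 < ij.2) && (s ij.2 < s ij.1)]|.

Definition bruhat_step n (u v : 'S_n) : Prop :=
  exists a b : 'I_n, a != b /\ (forall x, v x = u (tperm a b x)) /\
                     inv_len u < inv_len v.

Inductive bruhat_le n : 'S_n -> 'S_n -> Prop :=
| bruhat_refl u : bruhat_le u u
| bruhat_trans u v w : bruhat_step u v -> bruhat_le v w -> bruhat_le u w.

Definition oneline n (w : 'S_n) : seq nat := [seq (val (w k)).+1 | k <- enum 'I_n].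

Definition first_entries n (w : 'S_n) (c : nat) : seq nat :=
  [seq (val (w k)).+1 | k <- enum 'I_n & val k < c].

Definition defining_chain n (la : seq nat) (T : nat -> nat -> nat)
    (w : nat -> 'S_n) : Prop :=
  (forall j, 1 <= j -> j < lam1 la -> bruhat_le (w j) (w j.+1)) /\
  (forall j, 1 <= j <= lam1 la ->
     first_entries (w j) (collen la j) =i column la T j).

Definition minimal_defining_chain n (la : seq nat) (T : nat -> nat -> nat)
    (w : nat -> 'S_n) : Prop :=
  defining_chain la T w /\
  forall v : nat -> 'S_n, defining_chain la T v ->
    forall j, 1 <= j <= lam1 la -> bruhat_le (w j) (v j).

(* permutations in one-line form as seq nat; pi_k = pos pi k, k 1-indexed *)
Definition pos (pi : seq nat) (k : nat) : nat := nth 0 pi k.-1.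

Definition next_idx (n : nat) (pi : seq nat) (c v t : nat) : option nat :=
  let s := iota c.+1 (n - c) in
  let r := find (fun k => (v < pos pi k) && (pos pi k <= t)) s in
  if r < size s then Some (nth 0 s r) else None.

(* the indices i_1, ..., i_m following cur, with fuel *)
Fixpoint idx_chain (n : nat) (pi : seq nat) (c t cur fuel : nat) : seq nat :=
  match fuel with
  | 0 => [::]
  | fuel'.+1 =>
    if pos pi cur == t then [::] else
    match next_idx n pi c (pos pi cur) t with
    | Some k => k :: idx_chain n pi c t k fuel'
    | None => [::]
    end
  end.

Definition set_pos (pi : seq nat) (kv : nat * nat) : seq nat :=
  set_nth 0 pi kv.1.-1 kv.2.

(* pi^{(j,i)} from pi = pi^{(j,i+1)} *)
Definition greedy_step (n : nat) (la : seq nat) (T : nat -> nat -> nat)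
    (j : nat) (pi : seq nat) (i : nat) : seq nat :=
  if T j.-1 i == T j i then pi else
  let idxs := i :: idx_chain n pi (collen la j) (T j i) i n in
  let vals := [seq pos pi k | k <- idxs] in
  (* pi'_{i_x} = pi_{i_{x-1}} (x >= 1), pi'_{i_0} = pi_{i_m} *)
  foldl set_pos pi (zip idxs (rotr 1 vals)).

Definition greedy_init (n : nat) (la : seq nat) (T : nat -> nat -> nat) : seq nat :=
  let C1 := column la T 1 in
  sort leq C1 ++ sort leq [seq k <- iota 1 n | k \notin C1].

Definition greedy_col (n : nat) (la : seq nat) (T : nat -> nat -> nat)
    (j : nat) (pi : seq nat) : seq nat :=
  foldl (greedy_step n la T j) pi (rev (iota 1 (collen la j))).

(* greedy n la T j = pi^{(j,1)} for j >= 1 *)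
Fixpoint greedy (n : nat) (la : seq nat) (T : nat -> nat -> nat) (j : nat)
  : seq nat :=
  match j with
  | 0 => greedy_init n la T
  | 1 => greedy_init n la T
  | j'.+1 => greedy_col n la T j (greedy n la T j')
  end.

(* Main.v *)
Require Import Defs.
From mathcomp Require Import all_boot all_fingroup.
From mathcomp Require Import zify.
Set Implicit Arguments. Unset Strict Implicit. Unset Printing Implicit Defensive.


Lemma tpermv n (a b z : 'I_n) : (tperm a b z : nat) =
  if (z : nat) == a then (b : nat) else if (z : nat) == b then (a : nat) else z.
Proof.
case: tpermP => [->|->|za zb]; rewrite ?eqxx ?(inj_eq val_inj) //.
- by case: eqP => // ->.
- by case: eqP => // _; case: eqP.
Qed.

Lemma inv_swap n (u v : 'S_n) (a b : 'I_n) : a < b -> u a < u b ->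
  (forall x, v x = u (tperm a b x)) -> inv_len u < inv_len v.
Proof.
move=> ab uab Hv.
rewrite /inv_len.
set Iu := [set ij : 'I_n * 'I_n | (ij.1 < ij.2) && (u ij.2 < u ij.1)].
set Iv := [set ij : 'I_n * 'I_n | (ij.1 < ij.2) && (v ij.2 < v ij.1)].
pose t := tperm a b.
pose psi := fun ij : 'I_n * 'I_n =>
  if t ij.1 < t ij.2 then (t ij.1, t ij.2) else ij.
have tK : forall x, t (t x) = x by move=> x; rewrite /t tpermK.
have key : forall x y : 'I_n, x < y -> ~~ (t x < t y) ->
   (x = a :> nat) /\ (y = b :> nat) \/ (x = a :> nat) /\ (a < y < b)
   \/ (y = b :> nat) /\ (a < x < b).
  move=> x y xy; rewrite /t !tpermv.
  by case: (x =P a :> nat); case: (x =P b :> nat);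
     case: (y =P a :> nat); case: (y =P b :> nat); lia.
have inj : {in Iu &, injective psi}.
  move=> [x y] [x' y']; rewrite !inE /psi /= => /andP[xy _] /andP[xy' _].
  case: ifP => h1; case: ifP => h2 [e1 e2].
  - by rewrite -(tK x) -(tK y) e1 e2 !tK.
  - by move: h2; rewrite -e1 -e2 !tK xy.
  - by move: h1; rewrite e1 e2 !tK xy'.
  - by rewrite e1 e2.
have sub : psi @: Iu \subset Iv.
  apply/subsetP => _ /imsetP[[x y] + ->]; rewrite !inE /psi /= => /andP[xy uxy].
  case: ifP => h /=.
  - by rewrite h /= !Hv !tK.
  - rewrite xy /= !Hv.
    have := key x y xy (negbT h).
    have ta : t a = b by rewrite /t tpermL.
    have tb : t b = a by rewrite /t tpermR.
    move=> [[/val_inj ex /val_inj ey]|[[/val_inj ex ay]|[/val_inj ey ax]]].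
    + by move: uxy; rewrite ex ey; lia.
    + rewrite ex ta.
      have -> : t y = y.
        apply/val_inj => /=; rewrite /t tpermv; case: (y =P a :> nat); case: (y =P b :> nat); lia.
      by move: uxy; rewrite ex; lia.
    + rewrite ey tb.
      have -> : t x = x.
        apply/val_inj => /=; rewrite /t tpermv; case: (x =P a :> nat); case: (x =P b :> nat); lia.
      by move: uxy; rewrite ey; lia.
have abv : (a, b) \in Iv.
  by rewrite inE /= ab !Hv /t tpermL tpermR.
have abn : (a, b) \notin psi @: Iu.
  apply/imsetP => -[[x y]]; rewrite inE /psi /= => /andP[xy uxy].
  case: ifP => h [e1 e2].
  - by move: xy; rewrite -(tK x) -(tK y) -e1 -e2 /t tpermL tpermR; lia.
  - by move: uxy; rewrite -e1 -e2; lia.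
rewrite -(card_in_imset inj).
apply: proper_card; rewrite properEneq sub andbT.
by apply/eqP => e; move: abn; rewrite e abv.
Qed.


Definition R (s : seq nat) k a := count (fun x => a <= x) (take k s).
Definition leR (s1 s2 : seq nat) := forall k a, R s1 k a <= R s2 k a.
Definition swap (s : seq nat) a b :=
  set_nth 0 (set_nth 0 s a.-1 (pos s b)) b.-1 (pos s a).

Lemma take_set_nth (s : seq nat) p v k : p < size s ->
  take k (set_nth 0 s p v) = if p < k then set_nth 0 (take k s) p v else take k s.
Proof.
move=> ps; apply: (@eq_from_nth _ 0).
  have mx : maxn p.+1 (size s) = size s by apply/maxn_idPr.
  case: ifP => pk; rewrite ?size_set_nth !size_take ?size_set_nth mx //.
  by case: ifP => ks; apply/esym/maxn_idPr; lia.
have mx : maxn p.+1 (size s) = size s by apply/maxn_idPr.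
move=> q; rewrite size_take size_set_nth mx => qs.
have qk : q < k by move: qs; case: ifP; lia.
case: ifP => pk.
- by rewrite nth_take // !nth_set_nth /= nth_take.
- rewrite nth_take // nth_take // nth_set_nth /=; case: eqP => // qp; lia.
Qed.

Lemma count_nth_le (a : pred nat) (s : seq nat) p : p < size s ->
  a (nth 0 s p) <= count a s.
Proof.
move=> ps; case h: (a _) => //; rewrite -has_count; apply/hasP.
by exists (nth 0 s p) => //; apply: mem_nth.
Qed.

Lemma R_set s p v k x : p < size s ->
  R (set_nth 0 s p v) k x + (p < k) * (x <= nth 0 s p) =
  R s k x + (p < k) * (x <= v).
Proof.
move=> ps; rewrite /R take_set_nth //.
case: ifP => pk; rewrite ?mul0n ?mul1n ?addn0 //.
have pt : p < size (take k s) by rewrite size_take; case: ifP; lia.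
rewrite count_set_nth_ltn // nth_take //.
have := count_nth_le (fun x0 => x <= x0) pt; rewrite nth_take //= => h.
lia.
Qed.

Lemma R_swap s a b k x : 0 < a < b -> b <= size s -> pos s a < pos s b ->
  R (swap s a b) k x = R s k x + ((a <= k < b) && (pos s a < x <= pos s b)).
Proof.
move=> ab bs sab.
have e : nth 0 (set_nth 0 s a.-1 (pos s b)) b.-1 = pos s b.
  by rewrite nth_set_nth /=; case: eqP => //; lia.
have h1 := @R_set s a.-1 (pos s b) k x ltac:(lia).
have h2 := @R_set (set_nth 0 s a.-1 (pos s b)) b.-1 (pos s a) k x
   ltac:(rewrite size_set_nth; lia).
rewrite e in h2; rewrite /swap.
move: h1 h2 sab; rewrite /pos.
rewrite (_ : (a.-1 < k) = (a <= k)); last lia.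
rewrite (_ : (b.-1 < k) = (b <= k)); last lia.
rewrite (_ : (k < b) = ~~ (b <= k)); last lia.
case: (leqP a k); case: (leqP b k); case: (leqP x (nth 0 s a.-1));
  case: (leqP x (nth 0 s b.-1)); simpl; lia.
Qed.

Lemma leR_trans s1 s2 s3 : leR s1 s2 -> leR s2 s3 -> leR s1 s3.
Proof. by move=> h1 h2 k a; apply: leq_trans (h1 k a) (h2 k a). Qed.

Lemma R_S s k x : k < size s -> R s k.+1 x = R s k x + (x <= nth 0 s k).
Proof.
by move=> ks; rewrite /R (take_nth 0 ks) -cats1 count_cat /= addn0.
Qed.

Lemma leR_antisym s1 s2 : size s1 = size s2 -> leR s1 s2 -> leR s2 s1 -> s1 = s2.
Proof.
move=> sz h1 h2; apply: (@eq_from_nth _ 0) => // k ks.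
have e : forall x, (x <= nth 0 s1 k) = (x <= nth 0 s2 k).
  move=> x; have := h1 k.+1 x; have := h2 k.+1 x; have := h1 k x; have := h2 k x.
  rewrite !R_S -?sz //.
  by case: (x <= nth 0 s1 k); case: (x <= nth 0 s2 k); lia.
apply/eqP; rewrite eqn_leq -e leqnn e leqnn //.
Qed.


Definition isperm n (s : seq nat) := perm_eq s (iota 1 n).

Lemma isperm_size n s : isperm n s -> size s = n.
Proof. by move=> /perm_size ->; rewrite size_iota. Qed.
Lemma isperm_uniq n s : isperm n s -> uniq s.
Proof. by move=> /perm_uniq ->; apply: iota_uniq. Qed.
Lemma isperm_mem n s x : isperm n s -> (x \in s) = (0 < x <= n).
Proof. by move=> /perm_mem ->; rewrite mem_iota; lia. Qed.
Lemma isperm_nth n s k : isperm n s -> k < n -> 0 < nth 0 s k <= n.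
Proof.
move=> h kn; rewrite -(isperm_mem _ h); apply: mem_nth.
by rewrite (isperm_size h).
Qed.

Definition sperm n (s : seq nat) : 'S_n :=
  odflt 1%g [pick p : 'S_n | [forall x, val (p x) == (nth 0 s x).-1]].

Lemma sperm_spec n s : isperm n s -> forall x : 'I_n, val (sperm n s x) = (nth 0 s x).-1.
Proof.
move=> h.
pose f := fun x : 'I_n => (insubd x (nth 0 s x).-1 : 'I_n).
have fv : forall x, val (f x) = (nth 0 s x).-1.
  move=> x; rewrite /f val_insubd; have := isperm_nth h (ltn_ord x); case: ifP => //; lia.
have finj : injective f.
  move=> x y /(congr1 val); rewrite !fv => e; apply/val_inj/eqP.
  have := isperm_nth h (ltn_ord x); have := isperm_nth h (ltn_ord y) => h1 h2.
  have sz := isperm_size h.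
  rewrite -(nth_uniq 0 _ _ (isperm_uniq h)) ?sz ?ltn_ord //; apply/eqP.
  change (nth 0 s x = nth 0 s y); move: h1 h2 e; lia.
move=> x; rewrite /sperm.
case: (pickP (fun p : 'S_n => [forall x, val (p x) == (nth 0 s x).-1])) => [p /forallP hp|hn].
- by apply/eqP; apply: hp.
- move: (hn (perm finj)) => /forallP; case; move=> y; by rewrite permE fv.
Qed.

Lemma nth_oneline n (w : 'S_n) (k : 'I_n) : nth 0 (oneline w) k = (val (w k)).+1.
Proof.
rewrite /oneline (nth_map k) ?size_enum_ord //.
by rewrite nth_ord_enum.
Qed.

Lemma size_oneline n (w : 'S_n) : size (oneline w) = n.
Proof. by rewrite /oneline size_map size_enum_ord. Qed.

Lemma oneline_sperm n s : isperm n s -> oneline (sperm n s) = s.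
Proof.
move=> h; apply: (@eq_from_nth _ 0); rewrite size_oneline ?(isperm_size h) // => k kn.
rewrite (nth_oneline _ (Ordinal kn)) sperm_spec //=; have := isperm_nth h kn; lia.
Qed.

Lemma isperm_oneline n (w : 'S_n) : isperm n (oneline w).
Proof.
apply: uniq_perm; [|exact: iota_uniq|].
- rewrite map_inj_uniq ?enum_uniq // => x y [] /val_inj; apply: perm_inj.
- move=> x; rewrite mem_iota; apply/idP/idP.
  + by move=> /mapP[k _ ->]; have := ltn_ord (w k); rewrite /val /=; lia.
  + move=> hx; have hx' : x.-1 < n by lia.
    apply/mapP; exists ((w^-1)%g (Ordinal hx')); first by rewrite mem_enum.
    by rewrite permKV /=; lia.
Qed.

Lemma oneline_inj n (u v : 'S_n) : oneline u = oneline v -> u = v.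
Proof.
move=> e; apply/permP => x; apply/val_inj.
by have := congr1 (fun s => nth 0 s x) e; rewrite !nth_oneline; case.
Qed.

Lemma oneline_tperm n (u v : 'S_n) (a b : 'I_n) : a < b ->
  (forall x, v x = u (tperm a b x)) -> oneline v = swap (oneline u) a.+1 b.+1.
Proof.
move=> ab hv; apply: (@eq_from_nth _ 0).
  by rewrite /swap !size_set_nth !size_oneline; have := ltn_ord a; have := ltn_ord b; lia.
rewrite size_oneline => k kn.
have nth1 : forall (c : 'I_n), nth 0 (oneline u) c.+1.-1 = (val (u c)).+1.
  by move=> c; rewrite /= nth_oneline.
rewrite /swap /pos !nth1 !nth_set_nth /=.
rewrite (nth_oneline _ (Ordinal kn)) hv.
have e0 : nth 0 (oneline u) k = (val (u (Ordinal kn))).+1 := nth_oneline u (Ordinal kn).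
case: (k =P b :> nat) => kb.
  have -> : Ordinal kn = b by apply/val_inj.
  by rewrite tpermR.
rewrite nth_set_nth /=.
case: (k =P a :> nat) => ka.
  have -> : Ordinal kn = a by apply/val_inj.
  by rewrite tpermL.
rewrite tpermD ?e0 //; apply/eqP => /(congr1 val) /= ?; [apply: ka|apply: kb]; lia.
Qed.

Lemma bruhat_step_leR n (u v : 'S_n) : bruhat_step u v -> leR (oneline u) (oneline v).
Proof.
move=> [a [b [ab [hv hl]]]].
wlog lab : a b ab hv / a < b.
  move=> W; case: (ltngtP a b) => h; first exact: (W a b ab hv h).
  - apply: (W b a) => //; first by rewrite eq_sym.
    by move=> x; rewrite tpermC.
  - by move: ab => /eqP; case; apply/val_inj.
have uab : u a < u b.
  case: (ltngtP (u a) (u b)) => // h.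
  - have hu : forall x, u x = v (tperm a b x) by move=> x; rewrite hv tpermK.
    have hvab : v a < v b by rewrite !hv tpermL tpermR.
    have := inv_swap lab hvab hu; lia.
  - by move/val_inj/perm_inj: h => h; rewrite h eqxx in ab.
rewrite (oneline_tperm lab hv) => k x.
rewrite R_swap ?size_oneline //; first lia.
by rewrite /pos /= !nth_oneline.
Qed.

Lemma bruhat_leR n (u v : 'S_n) : bruhat_le u v -> leR (oneline u) (oneline v).
Proof.
elim=> [w|w1 w2 w3 h1 _ ih]; first by move=> k a.
exact: leR_trans (bruhat_step_leR h1) ih.
Qed.

Lemma bruhat_le_trans n (u v w : 'S_n) : bruhat_le u v -> bruhat_le v w -> bruhat_le u w.
Proof.
elim=> // x y z h _ ih hw; apply: bruhat_trans h (ih hw).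
Qed.


Lemma next_idx_some n pi c v t k : next_idx n pi c v t = Some k ->
  [/\ c < k <= n, v < pos pi k <= t &
      forall q, c < q < k -> ~~ ((v < pos pi q) && (pos pi q <= t))].
Proof.
rewrite /next_idx; set s := iota _ _; set a := fun k => _.
case: ifP => // h [<-].
have hs : size s = n - c by rewrite size_iota.
have e : forall i, i < n - c -> nth 0 s i = c.+1 + i by move=> i hi; rewrite nth_iota.
have h' := h; rewrite hs in h'.
rewrite e //; split.
- lia.
- by have := nth_find 0 (_ : has a s); rewrite e // has_find; apply.
- move=> q hq; have hq' : q - c.+1 < find a s by lia.
  have := before_find 0 hq'.
  rewrite e; last lia.
  by rewrite (_ : c.+1 + (q - c.+1) = q) ?/a; [move=> ->|lia].
Qed.

Lemma next_idx_none n pi c v t : next_idx n pi c v t = None ->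
  forall q, c < q <= n -> ~~ ((v < pos pi q) && (pos pi q <= t)).
Proof.
rewrite /next_idx; set s := iota _ _; set a := fun k => _.
case: ifP => // h _ q hq.
have : ~~ has a s by rewrite has_find h.
move/hasPn; apply; rewrite mem_iota; lia.
Qed.

Fixpoint sloop n c t r f (rho : seq nat) : seq nat :=
  match f with
  | 0 => rho
  | f'.+1 =>
    if pos rho r == t then rho else
    match next_idx n rho c (pos rho r) t with
    | Some k => sloop n c t r f' (swap rho r k)
    | None => rho
    end
  end.

Lemma pos_swap s a b q : 0 < a -> 0 < b -> 0 < q ->
  pos (swap s a b) q = if q == b then pos s a else if q == a then pos s b else pos s q.
Proof.
move=> ha hb hq; rewrite /swap /pos !nth_set_nth /=.
rewrite (_ : (q.-1 == b.-1) = (q == b)); last by apply/eqP/eqP; lia.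
rewrite nth_set_nth /=.
by rewrite (_ : (q.-1 == a.-1) = (q == a)); last by apply/eqP/eqP; lia.
Qed.

Lemma swap_perm s a b : 0 < a <= size s -> 0 < b <= size s -> perm_eq (swap s a b) s.
Proof.
move=> ha hb; apply/seq.permP => p; rewrite /swap /pos.
have h1 : a.-1 < size s by lia.
have h2 : b.-1 < size (set_nth 0 s a.-1 (nth 0 s b.-1)) by rewrite size_set_nth; lia.
have e : nth 0 (set_nth 0 s a.-1 (nth 0 s b.-1)) b.-1 = nth 0 s b.-1.
  by rewrite nth_set_nth /=; case: eqP => // ->.
rewrite count_set_nth_ltn // e count_set_nth_ltn //.
have := count_nth_le p h1; have := count_nth_le p h2; rewrite e.
have := count_nth_le p (_ : b.-1 < size s) => /(_ ltac:(lia)).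
rewrite count_set_nth_ltn //.
case: (p (nth 0 s a.-1)); case: (p (nth 0 s b.-1)); simpl; lia.
Qed.

Lemma set_nth_nth_id (s : seq nat) p : p < size s -> set_nth 0 s p (nth 0 s p) = s.
Proof.
move=> ps; apply: (@eq_from_nth _ 0).
  by rewrite size_set_nth; apply/maxn_idPr.
by move=> q _; rewrite nth_set_nth /=; case: eqP => // ->.
Qed.

Lemma set_nth_twice (s : seq nat) p y1 y2 :
  set_nth 0 (set_nth 0 s p y1) p y2 = set_nth 0 s p y2.
Proof. by rewrite set_set_nth eqxx. Qed.

Lemma rotr1_cons (x : nat) s : rotr 1 (x :: s) = last x s :: belast x s.
Proof. by rewrite lastI rotr1_rcons. Qed.

Section Chain.
Variables (n : nat) (pi : seq nat) (r c t : nat).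

Definition target (rho : seq nat) (cur : nat) (ks : seq nat) :=
  foldl set_pos rho ((r, pos pi (last cur ks)) :: zip ks (belast (pos pi cur) (map (pos pi) ks))).

Lemma chain_sloop f : forall rho cur, 0 < r <= c -> r <= size rho ->
  pos rho r = pos pi cur ->
  (forall q, c < q -> pos rho q != pos pi q -> (pos pi q <= pos pi cur) && (pos rho q <= pos pi cur)) ->
  sloop n c t r f rho = target rho cur (idx_chain n pi c t cur f).
Proof.
elim: f => [|f ih] rho cur hr hrs hcur hdiff.
  by rewrite /target /= /set_pos /= -hcur set_nth_nth_id //; lia.
rewrite /= hcur.
case: eqP => [_|ht].
  by rewrite /target /= /set_pos /= -hcur set_nth_nth_id //; lia.
have ef : find (fun k => (pos pi cur < pos rho k) && (pos rho k <= t)) (iota c.+1 (n-c)) =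
          find (fun k => (pos pi cur < pos pi k) && (pos pi k <= t)) (iota c.+1 (n-c)).
  apply: eq_in_find => q; rewrite mem_iota => hq.
  case: (eqVneq (pos rho q) (pos pi q)) => [->//|].
  move/(hdiff q ltac:(lia))/andP => [h1 h2].
  by rewrite !ltnNge h1 h2.
have en : next_idx n rho c (pos pi cur) t = next_idx n pi c (pos pi cur) t.
  by rewrite /next_idx ef.
rewrite en.
case hk: (next_idx n pi c (pos pi cur) t) => [k|]; last first.
  by rewrite /target /= /set_pos /= -hcur set_nth_nth_id //; lia.
have [/andP[hk1 hk1'] /andP[hk2 hk2'] hk3] := next_idx_some hk.
have rk : pos rho k = pos pi k.
  apply/eqP; apply: contraT => /(hdiff k ltac:(lia))/andP [h1 _]; lia.
rewrite (ih _ k); last first.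
- move=> q hq; rewrite pos_swap; try lia.
  case: (eqVneq q k) => [qk|qk].
    by subst q; rewrite hcur => _; apply/andP; split; lia.
  have qr : q != r by apply/eqP; lia.
  rewrite (negbTE qr).
  by move=> /(hdiff q hq)/andP [h1 h2]; apply/andP; split; lia.
- rewrite pos_swap; try lia; rewrite eqxx (_ : (r == k) = false) //; apply/eqP; lia.
- by rewrite /swap !size_set_nth; lia.
- done.
rewrite /target /=.
congr foldl.
rewrite /swap /set_pos /= set_set_nth.
rewrite (_ : (k.-1 == r.-1) = false); last by apply/eqP; lia.
by rewrite set_nth_twice hcur.
Qed.
End Chain.


Lemma greedy_step_sloop n la T j pi r : 0 < r <= collen la j -> r <= size pi ->
  pos pi r = T j.-1 r ->
  greedy_step n la T j pi r = sloop n (collen la j) (T j r) r n pi.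
Proof.
move=> hr hs hp; rewrite /greedy_step.
case: eqP => [e|ne].
  by case: n => //= n; rewrite hp e eqxx.
rewrite (@chain_sloop n pi r (collen la j) (T j r) n pi r) //; last first.
  by move=> q _; rewrite eqxx.
by rewrite /target map_cons rotr1_cons last_map.
Qed.

Lemma isperm_swap n s a b : isperm n s -> 0 < a <= n -> 0 < b <= n -> isperm n (swap s a b).
Proof.
move=> h ha hb; have sz := isperm_size h.
apply: perm_trans h; apply: swap_perm; rewrite sz; lia.
Qed.

Lemma swap_bruhat n rho a b : isperm n rho -> 0 < a < b -> b <= n ->
  pos rho a < pos rho b -> bruhat_step (sperm n rho) (sperm n (swap rho a b)).
Proof.
move=> h hab hb hlt.
have h' : isperm n (swap rho a b) by apply: isperm_swap => //; lia.
have ha' : a.-1 < n by lia.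
have hb' : b.-1 < n by lia.
have pa := isperm_nth h ha'; have pb := isperm_nth h hb'.
exists (Ordinal ha'), (Ordinal hb'); split; first by apply/eqP => /(congr1 val) /=; lia.
have eq : forall x, sperm n (swap rho a b) x = sperm n rho (tperm (Ordinal ha') (Ordinal hb') x).
  move=> x; apply/val_inj; rewrite !sperm_spec ?h' //; try lia.
  have -> : nth 0 (swap rho a b) x = pos (swap rho a b) x.+1 by [].
  rewrite pos_swap; try lia.
  rewrite tpermv /=.
  case: ((x:nat) =P a.-1) => xa; case: ((x:nat) =P b.-1) => xb; rewrite /pos.
  - lia.
  - rewrite (_ : (x.+1 == b) = false); last by apply/eqP; lia.
    by rewrite (_ : (x.+1 == a) = true); last by apply/eqP; lia.
  - by rewrite (_ : (x.+1 == b) = true); last by apply/eqP; lia.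
  - rewrite (_ : (x.+1 == b) = false); last by apply/eqP; lia.
    by rewrite (_ : (x.+1 == a) = false); last by apply/eqP; lia.
split; first exact: eq.
apply: (inv_swap _ _ eq) => /=; first lia.
rewrite /val /= !sperm_spec //; change ((nth 0 rho a.-1).-1 < (nth 0 rho b.-1).-1); move: hlt; rewrite /pos; lia.
Qed.


Lemma count_take_le (a : pred nat) s k : count a (take k s) <= count a s.
Proof. by rewrite -{2}(cat_take_drop k s) count_cat leq_addr. Qed.

Lemma count_lt_t (s : seq nat) al t : al <= t -> t \in s ->
  count (fun x => t < x) s < count (fun x => al <= x) s.
Proof.
move=> hal; elim: s => //= y s ih; rewrite in_cons; case/orP => [/eqP e|hs].
  subst y; rewrite ltnn hal /= add0n add1n ltnS; apply: sub_count => x /=; lia.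
have := ih hs; case: (ltnP t y); case: (leqP al y); lia.
Qed.

Lemma sloop_next n c r t rho : isperm n rho -> 0 < r <= c -> 0 < t <= n -> pos rho r < t ->
  (forall q, 0 < q < r -> pos rho q < pos rho r) ->
  (forall q, r < q <= c -> t < pos rho q) ->
  exists k, next_idx n rho c (pos rho r) t = Some k.
Proof.
move=> hp hr ht hlt h4 h5.
case hk: next_idx => [k|]; first by exists k.
have : t \in rho by rewrite (isperm_mem _ hp).
move/(nthP 0) => [p hpn hpt].
rewrite (isperm_size hp) in hpn.
have hq : pos rho p.+1 = t by [].
case: (ltnP p.+1 r) => h1.
  have := h4 p.+1 ltac:(lia); lia.
case: (ltnP c p.+1) => h2.
  have := next_idx_none hk (_ : c < p.+1 <= n) => /(_ ltac:(lia)).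
  by rewrite hq hlt leqnn.
case: (eqVneq p.+1 r) => h3.
  by move: hlt; rewrite -h3 hq ltnn.
have := h5 p.+1 ltac:(lia); lia.
Qed.

Lemma sloop_props n c r t f rho : isperm n rho -> 0 < r <= c -> c <= n -> 0 < t <= n ->
  pos rho r <= t ->
  (forall q, 0 < q < r -> pos rho q < pos rho r) ->
  (forall q, r < q <= c -> t < pos rho q) ->
  t - pos rho r <= f ->
  [/\ isperm n (sloop n c t r f rho),
      (forall q, 0 < q <= c -> q != r -> pos (sloop n c t r f rho) q = pos rho q),
      pos (sloop n c t r f rho) r = t &
      bruhat_le (sperm n rho) (sperm n (sloop n c t r f rho))].
Proof.
elim: f rho => [|f ih] rho hp hr hc ht hle h4 h5 hf.
  by split => //=; [lia|apply: bruhat_refl].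
rewrite /=; case: eqP => [e|ne].
  by split => //; apply: bruhat_refl.
have hlt : pos rho r < t by lia.
have [k hk] := sloop_next hp hr ht hlt h4 h5.
rewrite hk; have [/andP[hk1 hk1'] /andP[hk2 hk2'] hk3] := next_idx_some hk.
set rho1 := swap rho r k.
have p1 : isperm n rho1 by apply: isperm_swap => //; lia.
have e1 : forall q, 0 < q -> q != r -> q != k -> pos rho1 q = pos rho q.
  move=> q hq qr qk; rewrite /rho1 pos_swap; try lia.
  by rewrite (negbTE qr) (negbTE qk).
have e2 : pos rho1 r = pos rho k.
  rewrite /rho1 pos_swap; try lia; rewrite eqxx ifF //; apply/eqP; lia.
have hle1 : pos rho1 r <= t by rewrite e2.
have h41 : forall q, 0 < q < r -> pos rho1 q < pos rho1 r.
  move=> q hq; rewrite e1 ?e2; try (apply/eqP; lia); try lia.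
  have := h4 q hq; lia.
have h51 : forall q, r < q <= c -> t < pos rho1 q.
  move=> q hq; rewrite e1; try (apply/eqP; lia); try lia.
  exact: h5.
have hf1 : t - pos rho1 r <= f by rewrite e2; lia.
have [q1 q2 q3 q4] := ih rho1 p1 hr hc ht hle1 h41 h51 hf1.
split => //.
- move=> q hq qr; rewrite q2 // e1 //; try lia; apply/eqP; lia.
- apply: bruhat_trans q4; apply: swap_bruhat => //; lia.
Qed.


Lemma swap_leR n c r t k rho u : isperm n rho -> isperm n u -> 0 < r <= c -> c < k <= n ->
  pos rho r < pos rho k -> pos rho k <= t ->
  (forall q, 0 < q < r -> pos rho q < pos rho r) ->
  (forall q, r < q <= c -> t < pos rho q) ->
  (forall q, c < q < k -> ~~ ((pos rho r < pos rho q) && (pos rho q <= t))) ->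
  t \in take c u -> count (fun x => x < t) (take c u) <= r.-1 ->
  leR rho u -> leR (swap rho r k) u.
Proof.
move=> hp hu hr hk hrk hkt h4 h5 hmin htu hcnt hle k' al.
have szr := isperm_size hp; have szu := isperm_size hu.
rewrite R_swap; try lia.
case E: ((r <= k' < k) && (pos rho r < al <= pos rho k)); last by rewrite addn0.
move/andP: E => [/andP[E1 E2] /andP[E3 E4]].
rewrite addn1.
case: (ltnP k' c) => hkc.
-
  have Rr : R rho k' al <= k' - r.
    rewrite /R -(cat_take_drop r (take k' rho)) count_cat -take_min.
    rewrite (_ : minn r k' = r); last lia.
    have -> : count (fun x => al <= x) (take r rho) = 0.
      apply/eqP; rewrite -leqn0 leqNgt -has_count; apply/hasPn => x /(nthP 0) [i hi <-].
      rewrite size_take in hi; rewrite nth_take; last by move: hi; case: ifP; lia.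
      have : nth 0 rho i = pos rho i.+1 by [].
      move=> ->; rewrite -ltnNge.
      case: (ltnP i.+1 r) => hi'.
        have := h4 i.+1 ltac:(lia); lia.
      have -> : i.+1 = r by move: hi; case: ifP; lia.
      by [].
    rewrite add0n; apply: leq_trans (count_size _ _) _.
    rewrite size_drop size_take; case: ifP; lia.
  have Ru : k' - r.-1 <= R u k' al.
    have hsz : size (take k' u) = k' by rewrite size_take; case: ifP; lia.
    have := count_predC (fun x => al <= x) (take k' u); rewrite hsz.
    have : count (predC (fun x => al <= x)) (take k' u) <= r.-1.
      apply: leq_trans hcnt.
      rewrite (_ : take k' u = take k' (take c u)); last by rewrite -take_min; congr take; lia.
      apply: leq_trans (count_take_le _ _ _).
      by apply: sub_count => x /=; lia.
    rewrite /R; lia.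
  lia.
-
  have e1 : R rho k' al = R rho k' t.+1.
    rewrite /R; apply: eq_in_count => x /(nthP 0) [i hi <-].
    rewrite size_take in hi; rewrite nth_take; last by move: hi; case: ifP; lia.
    have : nth 0 rho i = pos rho i.+1 by [].
    move=> ->.
    have hik : i.+1 < k by move: hi; case: ifP; lia.
    case: (ltnP i.+1 r) => hi1.
      have := h4 i.+1 ltac:(lia); lia.
    case: (eqVneq i.+1 r) => hi2.
      by rewrite hi2; lia.
    case: (leqP i.+1 c) => hi3.
      have := h5 i.+1 ltac:(lia); lia.
    have := hmin i.+1 ltac:(lia).
    by case: (ltnP (pos rho r) (pos rho i.+1)); case: (leqP (pos rho i.+1) t); simpl; lia.
  have e2 : R u k' t.+1 < R u k' al.
    apply: count_lt_t; first lia.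
    rewrite (_ : take c u = take c (take k' u)) in htu; last by rewrite -take_min; congr take; lia.
    exact: mem_take htu.
  have := hle k' t.+1; lia.
Qed.

Lemma sloop_leR n c r t f rho u : isperm n rho -> 0 < r <= c -> c <= n -> 0 < t <= n ->
  pos rho r <= t ->
  (forall q, 0 < q < r -> pos rho q < pos rho r) ->
  (forall q, r < q <= c -> t < pos rho q) ->
  isperm n u -> t \in take c u -> count (fun x => x < t) (take c u) <= r.-1 ->
  leR rho u -> leR (sloop n c t r f rho) u.
Proof.
move=> + + + + + + + hu htu hcnt.
elim: f rho => [|f ih] rho hp hr hc ht hle h4 h5 hl; first by [].
rewrite /=; case: eqP => [e|ne]; first by [].
have hlt : pos rho r < t by lia.
have [k hk] := sloop_next hp hr ht hlt h4 h5.
rewrite hk; have [/andP[hk1 hk1'] /andP[hk2 hk2'] hk3] := next_idx_some hk.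
set rho1 := swap rho r k.
have p1 : isperm n rho1 by apply: isperm_swap => //; lia.
have e1 : forall q, 0 < q -> q != r -> q != k -> pos rho1 q = pos rho q.
  move=> q hq qr qk; rewrite /rho1 pos_swap; try lia.
  by rewrite (negbTE qr) (negbTE qk).
have e2 : pos rho1 r = pos rho k.
  rewrite /rho1 pos_swap; try lia; rewrite eqxx ifF //; apply/eqP; lia.
have hle1 : pos rho1 r <= t by rewrite e2.
have h41 : forall q, 0 < q < r -> pos rho1 q < pos rho1 r.
  move=> q hq; rewrite e1 ?e2; try (apply/eqP; lia); try lia.
  have := h4 q hq; lia.
have h51 : forall q, r < q <= c -> t < pos rho1 q.
  move=> q hq; rewrite e1; try (apply/eqP; lia); try lia.
  exact: h5.
apply: ih => //.
apply: swap_leR hp hu _ _ hk2 hk2' h4 h5 hk3 htu hcnt hl; lia.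
Qed.


Lemma sorted_geq_head (x : nat) s : sorted geq (x :: s) -> forall y, y \in s -> y <= x.
Proof.
move=> hs y hy.
have tr : transitive geq by move=> a b c' h1 h2; apply: leq_trans h2 h1.
by have /allP := order_path_min tr hs; apply.
Qed.

Lemma sorted_count (s : seq nat) j : sorted geq s -> 0 < j ->
  forall i, 0 < i -> (j <= nth 0 s i.-1) = (i <= count (fun x => j <= x) s).
Proof.
elim: s => [|x s ih] hs hj i hi.
  by rewrite nth_nil /=; lia.
have hs' : sorted geq s by move: hs => /= /path_sorted.
rewrite /=.
case: (leqP j x) => hjx.
  case: i hi => [|i] _ //=; case: i => [|i] /=.
    by rewrite hjx; lia.
  by have := ih hs' hj i.+1 isT => /= ->; rewrite add1n ltnS.
have c0 : count (fun x => j <= x) s = 0.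
  apply/eqP; rewrite -leqn0 leqNgt -has_count; apply/hasPn => y hy.
  have := sorted_geq_head hs hy; lia.
rewrite c0; case: i hi => [|i] _ //=; case: i => [|i] /=.
  lia.
case: (ltnP i (size s)) => his.
    have h := sorted_geq_head hs (mem_nth 0 his).
  by rewrite add0n ltn0; apply/negbTE; rewrite -ltnNge; exact: leq_ltn_trans h hjx.
by rewrite nth_default // add0n ltn0; apply/negbTE; rewrite -ltnNge; lia.
Qed.

Section Shape.
Variables (n : nat) (la : seq nat) (T : nat -> nat -> nat).
Hypothesis hsh : good_shape n la.
Hypothesis hss : semistandard n la T.

Lemma in_shapeE j i : 0 < j -> in_shape la j i = (0 < i <= collen la j).
Proof.
move=> hj; case: hsh => _ hso _ _.
rewrite /in_shape /lam /collen hj andbT.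
case: (posnP i) => [->//|hi] /=.
by rewrite sorted_count.
Qed.

Lemma collen_le j : collen la j <= n.
Proof. by case: hsh => hsz _ _ _; rewrite -hsz /collen count_size. Qed.

Lemma collen_mono j j' : j <= j' -> collen la j' <= collen la j.
Proof. by move=> h; apply: sub_count => x /=; lia. Qed.

Lemma collen_pos j : 0 < j <= lam1 la -> 0 < collen la j.
Proof.
move=> /andP[h1 h2]; have := @in_shapeE j 1 h1.
rewrite /in_shape /lam /= h1 /=.
rewrite (_ : nth 0 la 0 = lam1 la); last by case: (la).
by rewrite h2 => /esym.
Qed.

Lemma T_range j i : 0 < j -> 0 < i <= collen la j -> 0 < T j i <= n.
Proof.
case: hss => hb _ _ hj hi; apply: hb; by rewrite in_shapeE.
Qed.

Lemma T_col_lt j q r : 0 < j -> 0 < q -> q < r -> r <= collen la j -> T j q < T j r.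
Proof.
case: hss => _ _ hc hj hq.
elim: r => // r ih hqr hr.
have h1 := hc j r; rewrite in_shapeE // in h1.
case: (ltnP q r) => h.
  have := ih h ltac:(lia); have := h1 ltac:(lia); lia.
have -> : q = r by lia.
by apply: h1; lia.
Qed.

Lemma T_row_le j i : 0 < j -> 0 < i <= collen la j.+1 -> T j i <= T j.+1 i.
Proof.
case: hss => _ hr _ hj hi; apply: hr; by rewrite in_shapeE.
Qed.
End Shape.


Section Col.
Variables (n : nat) (la : seq nat) (T : nat -> nat -> nat).
Hypothesis hsh : good_shape n la.
Hypothesis hss : semistandard n la T.

Lemma col_mem j r : 0 < r <= collen la j -> T j r \in column la T j.
Proof. by move=> h; apply: map_f; rewrite mem_iota; lia. Qed.

Lemma count_lt_col j r (v : seq nat) : 0 < j -> 0 < r <= collen la j -> uniq v ->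
  v =i column la T j -> count (fun x => x < T j r) v <= r.-1.
Proof.
move=> hj hr hu hv; rewrite -size_filter.
suff H : size [seq x <- v | x < T j r] <= size [seq T j q | q <- iota 1 r.-1].
  by rewrite size_map size_iota in H.
apply: uniq_leq_size; first exact: filter_uniq.
move=> x; rewrite mem_filter => /andP[hx]; rewrite hv => /mapP[q]; rewrite mem_iota => hq ex.
subst x; apply: map_f; rewrite mem_iota.
case: (ltnP q r) => h; first lia.
case: (eqVneq q r) => e; first by move: hx; rewrite e ltnn.
have := T_col_lt hsh hss hj (_ : 0 < r) (_ : r < q) (_ : q <= collen la j).
move=> /(_ ltac:(lia) ltac:(lia) ltac:(lia)); lia.
Qed.

Variables (j : nat) (rho0 : seq nat).
Hypothesis hj : 1 < j.
Local Notation c := (collen la j).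

Definition Pc i rho := [/\ isperm n rho, (forall q, 0 < q <= i -> pos rho q = T j.-1 q),
  (forall q, i < q <= c -> pos rho q = T j q), bruhat_le (sperm n rho0) (sperm n rho) &
  forall u, isperm n u -> take c u =i column la T j -> leR rho0 u -> leR rho u].

Lemma col_aux i : i <= c -> forall rho, Pc i rho ->
  Pc 0 (foldl (greedy_step n la T j) rho (rev (iota 1 i))).
Proof.
elim: i => [|i ih] hi rho hP //.
rewrite (_ : iota 1 i.+1 = rcons (iota 1 i) i.+1); last first.
  by have := iotaD 1 i 1; rewrite addn1 add1n => ->; rewrite cats1.
rewrite rev_rcons /=.
apply: ih; first lia.
case: hP => p1 p2 p3 p4 p5.
have hc' : c <= collen la j.-1 by apply: collen_mono; lia.
have hcn : c <= n := collen_le hsh j.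
have hsz := isperm_size p1.
set r := i.+1.
have hpr : pos rho r = T j.-1 r by apply: p2; lia.
rewrite greedy_step_sloop //; try lia.
have hj1 : 0 < j.-1 by lia.
have ej : j.-1.+1 = j by lia.
have ht : 0 < T j r <= n by apply: (T_range hsh hss); lia.
have hle : pos rho r <= T j r.
  by rewrite hpr; have := T_row_le hsh hss hj1 (_ : 0 < r <= collen la j.-1.+1); rewrite ej; apply; lia.
have h4 : forall q, 0 < q < r -> pos rho q < pos rho r.
  move=> q hq; rewrite hpr p2; last lia.
  by apply: (T_col_lt hsh hss); lia.
have h5 : forall q, r < q <= c -> T j r < pos rho q.
  move=> q hq; rewrite p3; last lia.
  by apply: (T_col_lt hsh hss); lia.
have hf : T j r - pos rho r <= n by lia.
have hrc : 0 < r <= c by lia.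
have [q1 q2 q3 q4] := sloop_props p1 hrc hcn ht hle h4 h5 hf.
split => //.
- move=> q hq; rewrite q2; try lia; try (apply/eqP; lia); apply: p2; lia.
- move=> q hq; case: (eqVneq q r) => [->//|qr].
  rewrite q2 //; try lia; apply: p3; lia.
- exact: bruhat_le_trans p4 q4.
- move=> u hu hcol hl.
  apply: sloop_leR => //; try lia.
  + by rewrite hcol; apply: col_mem; lia.
  + apply: count_lt_col => //; try lia.
    by apply: take_uniq; apply: isperm_uniq hu.
  + exact: p5.
Qed.

End Col.


Lemma sorted_take_le (s X : seq nat) al : sorted ltn s -> uniq X -> {subset X <= s} ->
  count (fun x => al <= x) (take (size X) s) <= count (fun x => al <= x) X.
Proof.
elim: s X => [|y s ih] X hs hu hX; first by [].

have hs' : sorted ltn s by move: hs => /= /path_sorted.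
have hall : forall z, z \in s -> y < z.
  by move=> z hz; have /allP := order_path_min ltn_trans hs; apply.
case: (boolP (y \in X)) => hy.
  have hp := perm_to_rem hy.
  rewrite (seq.permP hp) (perm_size hp) /=.
  apply: leq_add => //; apply: ih => //; first exact: rem_uniq.
  move=> x; rewrite (mem_rem_uniq _ hu) => /andP[xy xX].
  by move: (hX x xX); rewrite in_cons (negbTE xy).
have hX' : {subset X <= s}.
  move=> x xX; move: (hX x xX); rewrite in_cons => /orP[/eqP e|//].
  by move: hy; rewrite -e xX.
case: (posnP (size X)) => [->|hsz]; first by rewrite take0.
rewrite -(prednK hsz) /=.
case: (leqP al y) => hal /=.
  have : all (fun x => al <= x) X.
    by apply/allP => x xX; have := hall x (hX' x xX); lia.
  rewrite all_count => /eqP ->.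
  have := count_size (fun x => al <= x) (take (size X).-1 s).
  rewrite size_take; case: ifP; lia.
rewrite add0n; apply: leq_trans (ih X hs' hu hX').
rewrite -{2}(prednK hsz) -[in X in _ <= X](cat_take_drop (size X).-1 (take (size X).-1.+1 s)).
rewrite count_cat -take_min; rewrite (_ : minn (size X).-1 (size X).-1.+1 = (size X).-1); last lia.
by rewrite leq_addr.
Qed.

Section Init.
Variables (n : nat) (la : seq nat) (T : nat -> nat -> nat).
Hypothesis hsh : good_shape n la.
Hypothesis hss : semistandard n la T.

Lemma column_sorted j : 0 < j -> sorted ltn (column la T j).
Proof.
move=> hj; rewrite /column sorted_map.
apply: (@sub_in_sorted _ (fun q => q \in iota 1 (collen la j))); last first.
- exact: iota_ltn_sorted.
- by apply/allP.
move=> q q'; rewrite !mem_iota => hq hq' /= hlt.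
by apply: (T_col_lt hsh hss); lia.
Qed.

Lemma size_column j : size (column la T j) = collen la j.
Proof. by rewrite /column size_map size_iota. Qed.

Lemma column_range j x : 0 < j -> x \in column la T j -> 0 < x <= n.
Proof.
move=> hj /mapP[q]; rewrite mem_iota => hq ->.
by apply: (T_range hsh hss); lia.
Qed.

Lemma nth_column j q : 0 < q <= collen la j -> nth 0 (column la T j) q.-1 = T j q.
Proof.
move=> hq; rewrite /column (nth_map 0) ?size_iota; last lia.
by rewrite nth_iota; [congr T; lia|lia].
Qed.

Local Notation C1 := (column la T 1).
Local Notation rest := [seq k <- iota 1 n | k \notin C1].

Lemma greedy_initE : greedy_init n la T = C1 ++ sort leq rest.
Proof.
rewrite /greedy_init sorted_sort //; first exact: leq_trans.
have := column_sorted (isT : 0 < 1); rewrite ltn_sorted_uniq_leq => /andP[_ ->] //.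
Qed.

Lemma C1_uniq : uniq C1.
Proof. by have := column_sorted (isT : 0 < 1); rewrite ltn_sorted_uniq_leq => /andP[]. Qed.

Lemma isperm_init : isperm n (greedy_init n la T).
Proof.
rewrite greedy_initE /isperm.
have hF : perm_eq ([seq x <- iota 1 n | x \in C1] ++ [seq x <- iota 1 n | predC (fun k => k \in C1) x]) (iota 1 n).
  by rewrite perm_filterC.
apply: perm_trans _ hF.
apply: perm_cat; last by rewrite perm_sort.
apply: uniq_perm; first exact: C1_uniq.
  by apply: filter_uniq; apply: iota_uniq.
move=> x; rewrite mem_filter mem_iota.
case h: (x \in C1) => //=.
by have := column_range (isT : 0 < 1) h; lia.
Qed.

Lemma pos_init q : 0 < q <= collen la 1 -> pos (greedy_init n la T) q = T 1 q.
Proof.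
move=> hq; rewrite greedy_initE /pos nth_cat size_column ifT; last lia.
exact: nth_column.
Qed.

Lemma leR_init u : isperm n u -> take (collen la 1) u =i C1 -> leR (greedy_init n la T) u.
Proof.
move=> hu hcol k al.
have szu := isperm_size hu.
have hcn := collen_le hsh 1.
have hsC := size_column 1.
set S := sort leq rest.
have hS : sorted ltn S.
  rewrite ltn_sorted_uniq_leq sort_uniq filter_uniq ?iota_uniq //=.
  by apply: sort_sorted; exact: leq_total.
have hszg := isperm_size isperm_init.
rewrite greedy_initE size_cat hsC in hszg.
have hszS : size S = n - collen la 1 by rewrite /S; lia.
rewrite greedy_initE /R -(cat_take_drop (collen la 1) u) !take_cat hsC size_take szu.
rewrite (_ : (if collen la 1 < n then collen la 1 else n) = collen la 1); last by case: ifP; lia.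
have hU := isperm_uniq hu; rewrite -(cat_take_drop (collen la 1) u) cat_uniq in hU.
move: hU => /and3P[hU1 hU2 hU3].
case: (ltnP k (collen la 1)) => hk.
- have hsub : {subset take k (take (collen la 1) u) <= C1}.
    by move=> x /mem_take; rewrite hcol.
  have := sorted_take_le al (column_sorted (isT : 0 < 1)) (take_uniq _ hU1) hsub.
  by rewrite !size_take_min szu (_ : minn k (minn (collen la 1) n) = k) //; lia.
- rewrite !count_cat.
  have pC : perm_eq (take (collen la 1) u) C1 by apply: uniq_perm => //; exact: C1_uniq.
  rewrite (seq.permP pC) leq_add2l.
  set X := take (k - collen la 1) (drop (collen la 1) u).
  have hX : uniq X by apply: take_uniq.
  have hXS : {subset X <= S}.
    move=> x /mem_take hx; rewrite mem_sort mem_filter mem_iota.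
    have : x \in u by rewrite -(cat_take_drop (collen la 1) u) mem_cat hx orbT.
    rewrite (isperm_mem _ hu) => hxr.
    have : x \notin take (collen la 1) u.
      by apply: contra hU2 => hxx; apply/hasP; exists x.
    rewrite hcol => ->; lia.
  have := sorted_take_le al hS hX hXS.
  have -> : take (size X) S = take (k - collen la 1) S.
    rewrite /X size_take size_drop szu.
    case: ifP => h //.
    by rewrite !take_oversize // hszS; lia.
  by [].
Qed.
End Init.


Lemma filter_iota_lt c n : [seq x <- iota 0 n | x < c] = iota 0 (minn c n).
Proof.
have e : n = minn c n + (n - minn c n) by lia.
rewrite {1}e iotaD filter_cat add0n.
rewrite (_ : [seq x <- iota (minn c n) (n - minn c n) | x < c] = [::]).
  rewrite cats0; apply/all_filterP/allP => x; rewrite mem_iota; lia.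
rewrite (eq_in_filter (a2 := pred0)) ?filter_pred0 // => x; rewrite mem_iota /=; lia.
Qed.

Lemma first_entriesE n (w : 'S_n) c : first_entries w c = take c (oneline w).
Proof.
rewrite /first_entries /oneline -map_take; congr map.
apply: (inj_map val_inj).
rewrite map_take val_enum_ord take_iota -filter_iota_lt -val_enum_ord filter_map //.
Qed.

Section Main.
Variables (n : nat) (la : seq nat) (T : nat -> nat -> nat).
Hypothesis hsh : good_shape n la.
Hypothesis hss : semistandard n la T.
Local Notation G := (greedy n la T).

Lemma greedy_props j : 0 < j <= lam1 la ->
  [/\ isperm n (G j), (forall q, 0 < q <= collen la j -> pos (G j) q = T j q),
      (1 < j -> bruhat_le (sperm n (G j.-1)) (sperm n (G j))) &
      forall u, isperm n u -> take (collen la j) u =i column la T j ->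
        (j = 1 \/ leR (G j.-1) u) -> leR (G j) u].
Proof.
elim: j => // j ih hj.
case: j ih hj => [|j] ih hj.
  split.
  - exact: isperm_init.
  - exact: pos_init.
  - by [].
  - by move=> u hu hc _; apply: leR_init.
have [g1 g2 g3 g4] := ih ltac:(lia).
have hj2 : 1 < j.+2 by [].
have hc' : collen la j.+2 <= collen la j.+1 by apply: collen_mono; lia.
have hP : Pc n la T j.+2 (G j.+1) (collen la j.+2) (G j.+1).
  split => //.
  - by move=> q hq; apply: g2; lia.
  - lia.
  - exact: bruhat_refl.
have [q1 q2 q3 q4 q5] := col_aux hsh hss hj2 (leqnn _) hP.
have eG : G j.+2 = greedy_col n la T j.+2 (G j.+1) by [].
rewrite eG /greedy_col.
split => //.
move=> u hu hcol [//|hl]; exact: q5.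
Qed.

Lemma take_greedy j : 0 < j <= lam1 la -> take (collen la j) (G j) = column la T j.
Proof.
move=> hj; have [g1 g2 _ _] := greedy_props hj.
have hcn := collen_le hsh j.
apply: (@eq_from_nth _ 0).
  by rewrite size_take_min size_column (isperm_size g1); lia.
move=> q; rewrite size_take_min (isperm_size g1) => hq.
rewrite nth_take; last lia.
rewrite (_ : q = q.+1.-1) // nth_column; last lia.
by have := g2 q.+1 ltac:(lia).
Qed.

End Main.

Unset Implicit Arguments.

Theorem proposition6p1 (n : nat) (la : seq nat) (T : nat -> nat -> nat)
    (w : nat -> 'S_n) :
  0 < n -> good_shape n la -> semistandard n la T ->
  minimal_defining_chain la T w ->
  forall j, 1 <= j <= lam1 la -> oneline (w j) = greedy n la T j.
Proof.
move=> hn hsh hss [[hwc hwf] hmin].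
pose v := fun k => sperm n (greedy n la T k).
have hv : defining_chain la T v.
  split.
  - move=> j hj1 hj2; have hj' : 0 < j.+1 <= lam1 la by lia.
    have [_ _ g3 _] := greedy_props hsh hss hj'.
    exact: g3.
  - move=> j hj; have [g1 _ _ _] := greedy_props hsh hss hj.
    rewrite first_entriesE /v oneline_sperm // take_greedy //.
have hle : forall j, 1 <= j <= lam1 la -> leR (oneline (w j)) (greedy n la T j).
  move=> j hj; have [g1 _ _ _] := greedy_props hsh hss hj.
  by have := bruhat_leR (hmin v hv j hj); rewrite /v oneline_sperm.
have hge : forall j, 1 <= j <= lam1 la -> leR (greedy n la T j) (oneline (w j)).
  elim=> // j ih hj.
  have [_ _ _ g4] := greedy_props hsh hss hj.
  apply: g4.
  - exact: isperm_oneline.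
  - by move=> x; rewrite -first_entriesE; apply: hwf.
  case: j ih hj => [|j] ih hj; first by left.
  right; apply: leR_trans (ih ltac:(lia)) _.
  apply: bruhat_leR; apply: hwc; lia.
move=> j hj; have [g1 _ _ _] := greedy_props hsh hss hj.
apply: leR_antisym; [|exact: hle|exact: hge].
by rewrite size_oneline (isperm_size g1).
Qed.
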